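(* Let $a_1,\dots,a_n\in\overline K$ ($n\ge2$) be pairwise distinct and $\mu=(\mu_1,\dots,\mu_n)$ positive integers. Let $A_\mu$ be the generalized magic matrix of the bouquet with multiplicities $\prod_i(y-a_i)^{\mu_i}$ and $(\mathcal R,\gamma)$ the tree associated with the underlying bouquet $(a_1,\dots,a_n)$. Then $A_\mu=\sum_{T\in\mathcal R}\gamma(T)A_\mu(T)$.
   Context: $\overline{K}=\bigcup_{d\ge1}\mathbf{C}[[x^{1/d}]][1/x]$ with valuation $\nu$; $m_{i,j}=\nu(a_i-a_j)$. $A_\mu=(\alpha_{i,j})$ with $\alpha_{i,j}=-\mu_im_{i,j}$ for $i\ne j$ and $\alpha_{i,i}=\sum_{k\neq i}\mu_km_{k,i}$. For $T\subset T_0=\{1,\dots,n\}$ with $|T|\ge2$, $A_\mu(T)=(\alpha_{i,j})$ with $\alpha_{i,j}=-\mu_i$ if $i\ne j$ and $\{i,j\}\subset T$, $\alpha_{i,i}=\sum_{k\ne i,k\in T}\mu_k$ if $i\in T$, $0$ otherwise. A ''rameau'' is $T\subset T_0$ with $|T|\ge2$ such that $m_{i,j}>m_{i,k}=m_{j,k}$ for all $i\neq j$ in $T$, $k\notin T$; $\mathcal R$ is the set of rameaux; $\alpha(T)=\inf\{m_{i,j}:i\ne j\in T\}$; $\gamma(T_0)=\alpha(T_0)$ and for $T\ne T_0$, $\gamma(T)=\alpha(T)-\alpha(T')$ with $T'$ the smallest rameau strictly containing $T$. *)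

(* Defs.v *)
From HB Require Import structures.
From mathcomp Require Import all_boot all_order all_algebra.
From mathcomp Require Import complex.
From mathcomp Require Import Rstruct.
From Stdlib Require Import ClassicalEpsilon.
Set Implicit Arguments. Unset Strict Implicit. Unset Printing Implicit Defensive.
Import Order.TTheory GRing.Theory Num.Theory.
Local Open Scope ring_scope.

Definition Ccoef : Type := complex Rdefinitions.R.

(* A generalized power series is a function rat -> C giving the coefficient
   of x^q.  It is a Puiseux series, i.e. an element of
   Kbar = \bigcup_{d>=1} C[[x^{1/d}]][1/x], iff there are d >= 1 and N : int
   such that every exponent q with nonzero coefficient is k/d with k >= N. *)
Definition is_puiseux (f : rat -> Ccoef) : Prop :=
  exists d : nat, (0 < d)%N /\ exists N : int,
    forall q : rat, f q != 0 -> exists k : int, N <= k /\ q = k%:~R / d%:R.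

Definition psub (f g : rat -> Ccoef) : rat -> Ccoef := fun q => f q - g q.

(* Valuation nu(f) = least exponent with nonzero coefficient
   (well defined for nonzero Puiseux series; nu(0) = +oo is never used). *)
Definition nu (f : rat -> Ccoef) : rat :=
  epsilon (inhabits 0)
    (fun q => f q != 0 /\ forall r : rat, r < q -> f r = 0).

Section Magic.
Variable n : nat.
Variable m : 'I_n -> 'I_n -> rat.
Variable mu : 'I_n -> nat.

Definition magic : 'M[rat]_n :=
  \matrix_(i, j) (if i == j then \sum_(k | k != i) (mu k)%:R * m k i
                  else - (mu i)%:R * m i j).

Definition magicT (T : {set 'I_n}) : 'M[rat]_n :=
  \matrix_(i, j) (if (i \in T) && (j \in T) then
                    (if i == j then \sum_(k in T | k != i) (mu k)%:R
                     else - (mu i)%:R)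
                  else 0).

Definition rameau (T : {set 'I_n}) : bool :=
  (1 < #|T|)%N &&
  [forall i, forall j, forall k,
     [&& i \in T, j \in T, i != j & k \notin T] ==>
       (m i k < m i j) && (m i k == m j k)].

Definition alpha (T : {set 'I_n}) : rat :=
  let s := [seq m p.1 p.2 | p <- enum [pred p : 'I_n * 'I_n |
                                  [&& p.1 \in T, p.2 \in T & p.1 != p.2]]] in
  foldr Num.min (head 0 s) s.

(* smallest rameau strictly containing T (rameaux containing T form a chain,
   so minimal cardinality = minimal for inclusion) *)
Definition parent (T : {set 'I_n}) : {set 'I_n} :=
  [arg min_(S < setT | rameau S && (T \proper S)) #|S|].

Definition gamma (T : {set 'I_n}) : rat :=
  if T == setT then alpha T else alpha T - alpha (parent T).

End Magic.

(* Main.v *)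
Require Import Defs.
From HB Require Import structures.
From mathcomp Require Import all_boot all_order all_algebra.
From mathcomp Require Import complex Rstruct.
From mathcomp Require Import ring lra.
From Stdlib Require Import ClassicalEpsilon Classical FunctionalExtensionality.
Import Order.TTheory GRing.Theory Num.Theory.
Local Open Scope ring_scope.
Set Implicit Arguments. Unset Strict Implicit.

Definition isval (h : rat -> Ccoef) (q : rat) :=
  h q != 0 /\ forall r, r < q -> h r = 0.

Lemma nu_char h q : isval h q -> nu h = q.
Proof.
move=> hq.
have := epsilon_spec (inhabits 0) (isval h) (ex_intro _ q hq).
rewrite -/(nu h) => [[hv hlt]].
case: hq => hq hqlt.
case: (ltgtP q (nu h)) => // c.
- by move: hq; rewrite hlt // eqxx.
- by move: hv; rewrite hqlt // eqxx.
Qed.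

Lemma nu_spec h q : isval h q -> isval h (nu h).
Proof. by move=> hq; rewrite (nu_char hq). Qed.

Lemma min_exists (h : rat -> Ccoef) (d : nat) (N : int) :
  (0 < d)%N -> (forall q, h q != 0 -> exists k : int, N <= k /\ q = k%:~R / d%:R) ->
  forall q0, h q0 != 0 -> exists q, isval h q.
Proof.
move=> d0 H q0 hq0.
pose P t := h ((N + (t : nat)%:Z)%:~R / d%:R) != 0.
have key : forall q, h q != 0 -> exists t, P t /\ q = (N + t%:Z)%:~R / d%:R.
  move=> q hq; have [k [Nk Eq]] := H q hq.
  exists (absz (k - N)).
  have E : N + (absz (k - N))%:Z = k.
    rewrite abszE ger0_norm ?subr_ge0 //.
    exact: (etrans (addrC _ _) (subrK N k)).
  by rewrite /P E -Eq; split.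
have [t0 [Pt0 _]] := key q0 hq0.
have ex : exists t, P t by exists t0.
case: (ex_minnP ex) => t Pt tmin.
exists ((N + t%:Z)%:~R / d%:R); split => // r rlt.
apply/eqP; apply/negPn/negP => hr.
have [t' [Pt' Er]] := key r hr.
have := tmin _ Pt'; move: rlt; rewrite Er => rlt tt'.
have : (N + t%:Z)%:~R / d%:R <= (N + t'%:Z)%:~R / d%:R :> rat.
  apply: ler_wpM2r; first by rewrite invr_ge0 ler0n.
  by rewrite ler_int lerD2l lez_nat.
by rewrite leNgt rlt.
Qed.

Lemma psub_exists (f g : rat -> Ccoef) : is_puiseux f -> is_puiseux g -> f <> g ->
  exists q, isval (psub f g) q.
Proof.
move=> [d1 [d10 [N1 H1]]] [d2 [d20 [N2 H2]]] fg.
have [q0 hq0] : exists q, psub f g q != 0.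
  apply: NNPP => nex; apply: fg; apply: functional_extensionality => q.
  apply/eqP; rewrite -subr_eq0; apply/negPn/negP => hq; apply: nex.
  by exists q.
have d1R : (d1%:R : rat) != 0 by rewrite pnatr_eq0 -lt0n.
have d2R : (d2%:R : rat) != 0 by rewrite pnatr_eq0 -lt0n.
apply: (@min_exists _ (d1 * d2) (Num.min (N1 * d2%:Z) (N2 * d1%:Z)) _ _ q0 hq0).
  by rewrite muln_gt0 d10.
move=> q hq.
case: (eqVneq (f q) 0) => fq.
  have gq : g q != 0 by apply: contraNneq hq => gq; rewrite /psub fq gq subr0.
  have [k [Nk ->]] := H2 q gq.
  exists (k * d1%:Z); split.
    rewrite ge_min; apply/orP; right; apply: ler_wpM2r => //.
  rewrite intrM natrM -[((d1%:Z)%:~R : rat)]/(d1%:R : rat).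
  by field; rewrite d2R d1R.
have [k [Nk ->]] := H1 q fq.
exists (k * d2%:Z); split.
  rewrite ge_min; apply/orP; left; apply: ler_wpM2r => //.
rewrite intrM natrM -[((d2%:Z)%:~R : rat)]/(d2%:R : rat).
by field; rewrite d2R d1R.
Qed.

Section Comb.
Variable n : nat.
Variable m : 'I_n -> 'I_n -> rat.
Hypothesis n2 : (2 <= n)%N.
Hypothesis msym : forall i j, m i j = m j i.
Hypothesis multra : forall i j k, i != j -> j != k -> i != k ->
  Num.min (m i j) (m j k) <= m i k.

Lemma rameauP (T : {set 'I_n}) : rameau m T -> forall i j k, i \in T -> j \in T -> i != j ->
  k \notin T -> (m i k < m i j) /\ (m i k = m j k).
Proof.
case/andP=> _ /forallP H i j k iT jT ij kT.
move: (H i) => /forallP /(_ j) /forallP /(_ k) /implyP.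
by rewrite iT jT ij kT => /(_ isT) /andP [-> /eqP ->].
Qed.

Lemma laminar (S S' : {set 'I_n}) x : rameau m S -> rameau m S' -> x \in S -> x \in S' ->
  (S \subset S') || (S' \subset S).
Proof.
move=> rS rS' xS xS'.
case: (boolP (S \subset S')) => // /subsetPn [y yS yS'].
case: (boolP (S' \subset S)) => // /subsetPn [z zS' zS].
have xy : x != y by apply/eqP => E; rewrite -E xS' in yS'.
have xz : x != z by apply/eqP => E; rewrite -E xS in zS.
have [h1 _] := rameauP rS xS yS xy zS.
have [h2 _] := rameauP rS' xS' zS' xz yS'.
by have := lt_trans h1 h2; rewrite ltxx.
Qed.

Lemma rameauT : rameau m setT.
Proof.
rewrite /rameau cardsT card_ord n2 /=.
apply/forallP=> i; apply/forallP=> j; apply/forallP=> k.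
by rewrite !in_setT /= !andbF.
Qed.

Lemma foldr_min_le (x0 x : rat) s : x \in s -> foldr Num.min x0 s <= x.
Proof.
elim: s => //= y s IH; rewrite in_cons => /orP [/eqP ->| xs].
  by rewrite ge_min lexx.
by rewrite ge_min (IH xs) orbT.
Qed.

Lemma foldr_min_ge (c x0 : rat) s : c <= x0 -> (forall x, x \in s -> c <= x) ->
  c <= foldr Num.min x0 s.
Proof.
move=> h0; elim: s => //= y s IH H.
rewrite le_min H ?mem_head //= IH // => x xs.
by apply: H; rewrite in_cons xs orbT.
Qed.

Lemma alpha_eq (T : {set 'I_n}) (c : rat) : (forall x y, x \in T -> y \in T -> x != y -> c <= m x y) ->
  (exists x y, [/\ x \in T, y \in T, x != y & m x y = c]) -> alpha m T = c.
Proof.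
move=> Hl [x [y [xT yT xy E]]].
rewrite /alpha.
set s := [seq _ | _ <- _].
have Hs : forall z, z \in s -> c <= z.
  move=> z /mapP [[p1 p2]]; rewrite mem_enum inE /= => /and3P [h1 h2 h3] ->.
  exact: Hl.
have ins : c \in s.
  rewrite -E; apply/mapP; exists (x, y) => //; by rewrite mem_enum inE /= xT yT xy.
apply/eqP; rewrite eq_le foldr_min_le //=; apply: foldr_min_ge => //.
by case: s Hs ins => //= z s Hs _; apply: Hs; exact: mem_head.
Qed.

Lemma chain_sum (T : {set 'I_n}) : rameau m T ->
  \sum_(S | rameau m S && (T \subset S)) gamma m S = alpha m T.
Proof.
move: {2}#|~: T| (leqnn #|~: T|) => k.
elim: k T => [|k IH] T hk rT.
  have ET : T = setT.
    have h0 : #|~: T| = 0%N by apply/eqP; rewrite -leqn0.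
    by apply/eqP; rewrite eqEcard subsetT /= cardsT -(cardsC T) h0 addn0.
  subst T.
  rewrite (big_pred1 setT); first by rewrite /gamma eqxx.
  move=> S /=; rewrite subTset andbC; case: eqP => //= ->; by rewrite rameauT.
case: (eqVneq T setT) => [ET|nT].
  by subst T; apply: IH => //; rewrite setCT cards0.
have P0 : rameau m setT && (T \proper setT) by rewrite rameauT properT nT.
have := @arg_minnP _ setT (fun S : {set 'I_n} => rameau m S && (T \proper S)) (fun S : {set 'I_n} => #|S|) P0.
rewrite -/(parent m T); set P := parent m T.
have EP : parent m T = P by [].
clearbody P.
move=> H; move: EP; case: H => {}P /andP [rP TP] Pmin EP.
rewrite (bigD1 T) /=; last by rewrite rT subxx.
have [x xT] : exists x, x \in T.
  case/andP: rT => h _; apply/set0Pn; rewrite -card_gt0; exact: ltnW.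
rewrite (eq_bigl (fun S => rameau m S && (P \subset S))); last first.
  move=> S; apply/idP/idP.
    case/andP => /andP [rS TS] ST.
    rewrite rS /=.
    have TpS : T \proper S by rewrite properEneq eq_sym ST TS.
    have xP : x \in P by apply: (subsetP (proper_sub TP)).
    have xS : x \in S by apply: (subsetP TS).
    case/orP: (laminar rS rP xS xP) => // SP.
    have := Pmin S; rewrite rS TpS => /(_ isT) cPS.
    have : S == P by rewrite eqEcard SP cPS.
    by move/eqP ->.
  case/andP => rS PS; rewrite rS (subset_trans (proper_sub TP) PS) /=.
  apply/eqP => E; subst S.
  by have := proper_sub_trans TP PS; rewrite properxx.
rewrite IH //; first by rewrite /gamma (negbTE nT) EP subrK.
rewrite -ltnS; apply: leq_trans hk; apply: proper_card; by rewrite properC.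
Qed.

Section Pair.
Variables i j : 'I_n.
Hypothesis ij : i != j.

Definition ball := [set k | (k == i) || (m i j <= m i k)].

Lemma iB : i \in ball. Proof. by rewrite inE eqxx. Qed.
Lemma jB : j \in ball. Proof. by rewrite inE lexx orbT. Qed.

Lemma ball_ge x y : x \in ball -> y \in ball -> x != y -> m i j <= m x y.
Proof.
rewrite !inE => hx hy xy.
case: (eqVneq x i) => [Ex|xi].
  subst x; move: hy; by rewrite eq_sym (negbTE xy).
case: (eqVneq y i) => [Ey|yi].
  rewrite Ey [m x i]msym; move: hx; by rewrite (negbTE xi).
rewrite (negbTE xi) /= in hx; rewrite (negbTE yi) /= in hy.
apply: le_trans (multra xi (_ : i != y) xy); last by rewrite eq_sym.
by rewrite le_min hy [m x i]msym hx.
Qed.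

Lemma ball_rameau : rameau m ball.
Proof.
apply/andP; split.
  rewrite (cardD1 i) iB add1n ltnS; apply/card_gt0P; exists j.
  by rewrite inE /= jB eq_sym ij.
apply/forallP=> x; apply/forallP=> y; apply/forallP=> z; apply/implyP.
case/and4P => xB yB xy zB.
have zi : z != i by apply: contraNneq zB => ->; exact: iB.
have hz : m i z < m i j by move: zB; rewrite inE negb_or zi /= -ltNge.
have eqz : forall w, w \in ball -> m w z = m i z.
  move=> w wB; case: (eqVneq w i) => [->//|wi].
  have wz : w != z by apply: contraNneq zB => <-.
  have hw : m i j <= m i w by move: wB; rewrite inE (negbTE wi).
  have iz : i != z by rewrite eq_sym.
  have l1 := multra wi iz wz.
  have iw : i != w by rewrite eq_sym.
  have l2 := multra iw wz iz.
  have hiw : m i z < m i w by exact: lt_le_trans hz hw.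
  apply/eqP; rewrite eq_le; apply/andP; split.
    move: l2; rewrite ge_min => /orP [|//].
    by rewrite leNgt hiw.
  move: l1; rewrite ge_min => /orP [|//].
  by rewrite msym => h; apply: ltW; apply: lt_le_trans hiw h.
rewrite (eqz x xB) (eqz y yB) eqxx andbT.
exact: lt_le_trans hz (ball_ge xB yB xy).
Qed.

Lemma ball_sub (T : {set 'I_n}) : rameau m T -> i \in T -> j \in T -> ball \subset T.
Proof.
move=> rT iT jT; apply/subsetP => k kB; apply/negPn/negP => kT.
have [h _] := rameauP rT iT jT ij kT.
move: kB; rewrite inE; case: (eqVneq k i) => [Ek|ki] /=.
  by move: kT; rewrite Ek iT.
by rewrite leNgt h.
Qed.

Lemma alpha_ball : alpha m ball = m i j.
Proof.
apply: alpha_eq; first exact: ball_ge.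
by exists i, j; rewrite iB jB ij.
Qed.

Lemma pair_sum :
  \sum_(T | rameau m T && (i \in T) && (j \in T)) gamma m T = m i j.
Proof.
rewrite -alpha_ball -chain_sum; last exact: ball_rameau.
apply: eq_bigl => T; apply/idP/idP.
  by case/andP => /andP [rT iT] jT; rewrite rT ball_sub.
case/andP => rT BT; rewrite rT (subsetP BT _ iB) (subsetP BT _ jB).
done.
Qed.

End Pair.

Lemma magic_decomp (mu : 'I_n -> nat) :
  magic m mu = \sum_(T : {set 'I_n} | rameau m T) gamma m T *: magicT mu T.
Proof.
apply/matrixP => i j; rewrite summxE !mxE.
rewrite (eq_bigr (fun T => gamma m T * magicT mu T i j)); last by move=> T _; rewrite mxE.
rewrite /magicT; under eq_bigr do rewrite mxE.
case: (eqVneq i j) => [<-|ij].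
  transitivity (\sum_(T | rameau m T) \sum_(k | k != i)
     (if (i \in T) && (k \in T) then gamma m T * (mu k)%:R else 0)); last first.
    apply: eq_bigr => T _; case: (i \in T) => /=; last by rewrite mulr0 big1.
    by rewrite mulr_sumr big_mkcondl.
  rewrite exchange_big /=; apply: eq_bigr => k ki.
  rewrite -big_mkcondr -mulr_suml.
  have ik : i != k by rewrite eq_sym.
  rewrite (eq_bigl _ _ (fun T => andbA _ _ _)) (pair_sum ik) mulrC msym //.
under eq_bigr => T _ do rewrite (fun_if (fun x => gamma m T * x)) mulr0.
rewrite -big_mkcondr -mulr_suml.
rewrite (eq_bigl _ _ (fun T => andbA _ _ _)) (pair_sum ij) mulrC //.
Qed.
End Comb.

Theorem mainTheorem9 (n : nat) (a : 'I_n -> rat -> Ccoef) (mu : 'I_n -> nat) :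
  (2 <= n)%N ->
  (forall i, is_puiseux (a i)) ->
  (forall i j, i != j -> a i <> a j) ->
  (forall i, (0 < mu i)%N) ->
  let m := fun i j => nu (psub (a i) (a j)) in
  magic m mu = \sum_(T : {set 'I_n} | rameau m T) gamma m T *: magicT mu T.
Proof.
move=> n2 pa adist _ m.
have ex : forall i j, i != j -> isval (psub (a i) (a j)) (m i j).
  move=> i j ij; have [q hq] := psub_exists (pa i) (pa j) (adist i j ij).
  exact: nu_spec hq.
apply: magic_decomp => //.
  move=> i j; case: (eqVneq i j) => [->//|ij].
  have ji : j != i by rewrite eq_sym.
  have [h1 h2] := ex j i ji.
  apply: nu_char; split.
    by move: h1; rewrite /psub -opprB oppr_eq0.
  by move=> r rlt; rewrite /psub -opprB [_ - _]h2 ?oppr0.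
move=> i j k ij jk ik.
rewrite leNgt; apply/negP; rewrite lt_min => /andP [l1 l2].
have [_ z1] := ex i j ij.
have [_ z2] := ex j k jk.
have [h3 _] := ex i k ik.
move: h3; rewrite /psub.
have -> : a i (m i k) - a k (m i k) =
  (a i (m i k) - a j (m i k)) + (a j (m i k) - a k (m i k)) by rewrite addrA subrK.
by rewrite [_ - _]z1 // [a j _ - _]z2 // addr0 eqxx.
Qed.
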